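(* Let $K$ be any complete non-Archimedean field and let $\mathbf{\Gamma}:\overline{\mathcal{O}}\to K$ be a continuous non-vanishing function. Then $H:\overline{\mathcal{O}}\to K$ is a continuous non-vanishing function satisfying, for all $n\in\mathbb{N}$ and all $\mathbf{x}\in\overline{\mathcal{O}}$ with $\varphi^{(n)}(-\mathbf{x})=-\mathbf{x}$, \[\prod_{j=0}^{n-1} \mathbf{\Gamma}\left(-\varphi^{(j)}(-\mathbf{x})\right) = \prod_{j=0}^{n-1} H\left(-\varphi^{(j)}(-\mathbf{x})\right),\] if and only if \[H(\mathbf{x})=\mathbf{\Gamma}(\mathbf{x})\cdot\frac{G(\mathbf{x})}{G\left(-\varphi(-\mathbf{x})\right)}\] for all $\mathbf{x}\in\overline{\mathcal{O}}$, where $G:\overline{\mathcal{O}}\to K$ is some (any) continuous non-vanishing function.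
   Context: Let $\overline{\mathcal{O}}$ be a direct product of finitely many rings $\overline{\mathcal{O}}_t$, where each $\overline{\mathcal{O}}_t$ is the ring of integers of some non-Archimedean local field with a fixed uniformizer. For each $t$, let $\pi_t\in\overline{\mathcal{O}}_t$ be a (positive) power of the given uniformizer and let $S_t\subseteq\overline{\mathcal{O}}_t$ be a complete set of representatives of $\overline{\mathcal{O}}_t/(\pi_t)$. For $\mathbf{x}=(\mathbf{x}_t)_t\in\overline{\mathcal{O}}$ write $\mathbf{x}_t=\sum_{i\ge0}x_{t,i}\pi_t^i$ with $x_{t,i}\in S_t$. Define $\varphi:\overline{\mathcal{O}}\to\overline{\mathcal{O}}$ by $\varphi(\mathbf{x})=(\varphi_t(\mathbf{x}_t))_t$ where $\varphi_t(\mathbf{x}_t)=\sum_{i\ge0}x_{t,i+1}\pi_t^i$ (shift of digits), and $\varphi^{(j)}$ denotes its $j$-fold iterate. *)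

(* Defs.v *)
From HB Require Import structures.
From mathcomp Require Import all_boot all_order all_algebra.
From mathcomp Require Import reals.
From Stdlib Require Import ClassicalEpsilon.

Set Implicit Arguments.
Unset Strict Implicit.
Unset Printing Implicit Defensive.

Import Order.TTheory GRing.Theory Num.Theory.
Local Open Scope ring_scope.

Section Defs.
Variable R : realType.

Definition nonarch_abs (K : fieldType) (abs : K -> R) : Prop :=
  (forall x, 0 <= abs x) /\
  (forall x, abs x = 0 <-> x = 0) /\
  (forall x y, abs (x * y) = abs x * abs y) /\
  (forall x y, abs (x + y) <= Num.max (abs x) (abs y)).

Definition abs_cauchy (K : fieldType) (abs : K -> R) (u : nat -> K) : Prop :=
  forall eps, 0 < eps -> exists N, forall i j, (N <= i)%N -> (N <= j)%N ->
    abs (u i - u j) < eps.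

Definition abs_converges (K : fieldType) (abs : K -> R) (u : nat -> K) : Prop :=
  exists l, forall eps, 0 < eps -> exists N, forall i, (N <= i)%N ->
    abs (u i - l) < eps.

Definition complete_nonarch_field (K : fieldType) (abs : K -> R) : Prop :=
  nonarch_abs abs /\ forall u, abs_cauchy abs u -> abs_converges abs u.

(** Non-Archimedean local field: complete, discretely (and nontrivially)
    valued, with finite residue field. *)
Definition nonarch_local_field (F : fieldType) (abs : F -> R) : Prop :=
  complete_nonarch_field abs /\
  (exists w : F, 0 < abs w < 1 /\
     forall x, x <> 0 -> exists k : int, abs x = abs w ^ k) /\
  (exists s : seq F, forall x, abs x <= 1 ->
     exists2 y, y \in s & abs (x - y) < 1).

(** A uniformizer: a generator of the maximal ideal of the ring of integers. *)
Definition uniformizer (F : fieldType) (abs : F -> R) (w : F) : Prop :=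
  0 < abs w < 1 /\ forall x, abs x < 1 -> abs x <= abs w.

(** [S] is a complete set of representatives of O/(pi), O = {abs <= 1}. *)
Definition complete_reps (F : fieldType) (abs : F -> R) (pi : F)
  (S : F -> Prop) : Prop :=
  (forall s, S s -> abs s <= 1) /\
  (forall x, abs x <= 1 -> exists s, S s /\ abs (x - s) <= abs pi /\
     forall s', S s' -> abs (x - s') <= abs pi -> s' = s).

Definition digit0 (F : fieldType) (abs : F -> R) (pi : F) (S : F -> Prop)
  (x : F) : F :=
  epsilon (inhabits 0) (fun s => S s /\ abs (x - s) <= abs pi).

(** Digit shift: if x = sum_i x_i pi^i then shift x = sum_i x_{i+1} pi^i
    = (x - x_0) / pi. *)
Definition digit_shift (F : fieldType) (abs : F -> R) (pi : F)
  (S : F -> Prop) (x : F) : F :=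
  (x - digit0 abs pi S x) / pi.

(** The product  Obar = prod_t O_t  is represented inside
    forall t, F t by the predicate [inObar]. *)
Definition inObar (m : nat) (F : 'I_m -> fieldType)
  (absF : forall t, F t -> R) (x : forall t, F t) : Prop :=
  forall t, absF t (x t) <= 1.

Definition negO (m : nat) (F : 'I_m -> fieldType) (x : forall t, F t)
  : forall t, F t := fun t => - x t.

Definition varphi (m : nat) (F : 'I_m -> fieldType)
  (absF : forall t, F t -> R) (varpi : forall t, F t) (e : 'I_m -> nat)
  (S : forall t, F t -> Prop) (x : forall t, F t) : forall t, F t :=
  fun t => digit_shift (absF t) (varpi t ^+ e t) (S t) (x t).

(** Continuity on Obar (product topology of the valuation topologies). *)
Definition contObar (m : nat) (F : 'I_m -> fieldType)
  (absF : forall t, F t -> R) (K : fieldType) (absK : K -> R)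
  (f : (forall t, F t) -> K) : Prop :=
  forall x, inObar absF x -> forall eps, 0 < eps -> exists2 delta, 0 < delta &
    forall y, inObar absF y -> (forall t, absF t (y t - x t) < delta) ->
      absK (f y - f x) < eps.

Definition nonvanishingObar (m : nat) (F : 'I_m -> fieldType)
  (absF : forall t, F t -> R) (K : fieldType) (f : (forall t, F t) -> K)
  : Prop :=
  forall x, inObar absF x -> f x <> 0.

End Defs.

(* Main.v *)
Require Import Defs.
From HB Require Import structures.
From mathcomp Require Import all_boot all_order all_algebra.
From mathcomp Require Import reals ring lra.
From Stdlib Require Import ClassicalEpsilon FunctionalExtensionality.

Import Order.TTheory GRing.Theory Num.Theory.
Local Open Scope ring_scope.

Module Aux2.

Set Implicit Arguments.
Unset Strict Implicit.

Lemma bern (R : realType) (b : R) n : 0 <= b -> 1 + n%:R * b <= (1 + b) ^+ n.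
Proof.
move=> hb; elim: n => [|n IH]; first by rewrite expr0 mul0r addr0.
rewrite exprS.
have h1: 0 <= (1+b) ^+ n by apply: exprn_ge0; lra.
have h2: 0 <= n%:R * b :> R by apply: mulr_ge0.
rewrite -natr1 /=; nra.
Qed.

Lemma small_pow (R : realType) (a d : R) : 0 <= a -> a < 1 -> 0 < d ->
  exists N, forall n, (N <= n)%N -> a ^+ n < d.
Proof.
move=> ha0 ha1 hd.
have [->|az] := eqVneq a 0.
  by exists 1%N => n hn; rewrite expr0n; case: n hn.
have hap : 0 < a by rewrite lt_def az.
set b := a^-1 - 1.
have hb : 0 < b by rewrite /b subr_gt0 invf_gt1.
set x := (d * b)^-1.
have hx : 0 <= x by rewrite /x invr_ge0 mulr_ge0 // ltW.
exists (Num.Def.archi_bound x) => n hn.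
have h1 := archi_boundP hx.
have h2 : (Num.Def.archi_bound x)%:R <= n%:R :> R by rewrite ler_nat.
have hB := @bern _ b n (ltW hb).
have ha : a = (1 + b)^-1 by rewrite /b addrC subrK invrK.
rewrite ha exprVn.
have hpos : 0 < (1 + b) ^+ n by apply: exprn_gt0; lra.
rewrite -(ltr_pM2r hpos) mulVf ?gt_eqF //.
have hxn : x < n%:R by apply: lt_le_trans h1 h2.
have h3 : (d * b)^-1 * (d*b) < n%:R * (d * b) by rewrite ltr_pM2r // mulr_gt0.
rewrite mulVf in h3; last by rewrite mulf_neq0 // gt_eqF.
have h4 : 0 <= n%:R :> R by [].
nra.
Qed.

Section NA.
Variables (R : realType) (K : fieldType) (abs : K -> R).
Hypothesis h : nonarch_abs abs.

Lemma na_ge0 x : 0 <= abs x. Proof. by case: h. Qed.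
Lemma na_eq0 x : abs x = 0 <-> x = 0. Proof. by case: h => _ []. Qed.
Lemma na_mul x y : abs (x * y) = abs x * abs y. Proof. by case: h => _ [_ []]. Qed.
Lemma na_add x y : abs (x + y) <= Num.max (abs x) (abs y).
Proof. by case: h => _ [_ [_]]. Qed.
Lemma na_gt0 x : x != 0 -> 0 < abs x.
Proof. move=> hx; rewrite lt_def na_ge0 andbT; apply/eqP => /na_eq0 /eqP; exact/negP. Qed.
Lemma na_neq0 x : x != 0 -> abs x != 0.
Proof. by move=> /na_gt0 /gt_eqF ->. Qed.

Lemma na1 : abs 1 = 1.
Proof.
have h1 : abs 1 * abs 1 = abs 1 by rewrite -na_mul mulr1.
have h2 : abs 1 != 0 by apply: na_neq0; exact: oner_neq0.
by apply: (mulIf h2); rewrite h1 mul1r.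
Qed.

Lemma naN1 : abs (-1) = 1.
Proof.
have h1 : abs (-1) * abs (-1) = 1 by rewrite -na_mul mulrNN mulr1 na1.
have h0 := na_ge0 (-1). nra.
Qed.

Lemma naN x : abs (- x) = abs x.
Proof. by rewrite -mulN1r na_mul naN1 mul1r. Qed.

Lemma naB x y : abs (x - y) = abs (y - x).
Proof. by rewrite -naN opprB. Qed.

Lemma naV x : abs (x^-1) = (abs x)^-1.
Proof.
have [->|hx] := eqVneq x 0; first by rewrite invr0 (proj2 (na_eq0 0) erefl) invr0.
have : abs (x^-1) * abs x = 1 by rewrite -na_mul mulVf // na1.
move=> e; apply: (mulIf (na_neq0 hx)); rewrite e mulVf //; exact: na_neq0.
Qed.

Lemma naD x y : abs (x / y) = abs x / abs y.
Proof. by rewrite na_mul naV. Qed.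

Lemma naX x n : abs (x ^+ n) = abs x ^+ n.
Proof. elim: n => [|n IH]; first by rewrite !expr0 na1. by rewrite !exprS na_mul IH. Qed.

Lemma na_sub x y : abs (x - y) <= Num.max (abs x) (abs y).
Proof. by rewrite -(naN y) na_add. Qed.

Lemma na_le x y c : abs x <= c -> abs y <= c -> abs (x + y) <= c.
Proof. move=> h1 h2; apply: le_trans (na_add x y) _; by rewrite ge_max h1 h2. Qed.

Lemma na_le_sub x y c : abs x <= c -> abs y <= c -> abs (x - y) <= c.
Proof. by move=> h1 h2; apply: na_le => //; rewrite naN. Qed.

Lemma na_eq_of_lt a b : abs (a - b) < abs b -> abs a = abs b.
Proof.
move=> hab.
have e : a = (a - b) + b by rewrite subrK.
have h1 : abs a <= abs b.
  rewrite {1}e; apply: na_le => //; exact: ltW.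
have h2 : abs b <= Num.max (abs (b - a)) (abs a).
  by rewrite -[X in abs X <= _](subrK a b) na_add.
rewrite naB in hab.
apply/eqP; rewrite eq_le h1 /=.
move: h2; rewrite le_max => /orP [] // h3.
by move: (lt_le_trans hab h3); rewrite ltxx.
Qed.

Lemma na_1sub a : abs a < 1 -> abs (1 - a) = 1.
Proof.
move=> ha; rewrite -na1; apply: na_eq_of_lt.
by rewrite addrAC subrr add0r naN na1.
Qed.

Definition ap (e : R) (a b : K) := abs (a - b) <= e * abs b.

Lemma ap_abs e a b : 0 <= e -> e < 1 -> ap e a b -> abs a = abs b.
Proof.
rewrite /ap => e0 e1 hab.
have [b0|bn] := eqVneq b 0.
  move: hab; rewrite b0 subr0 (proj2 (na_eq0 0) erefl) mulr0 => ha.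
  have := na_ge0 a => ha'.
  have : abs a = 0 by apply/eqP; rewrite eq_le ha ha'.
  by move=> ->.
apply: na_eq_of_lt; apply: le_lt_trans hab _.
have := na_gt0 bn; nra.
Qed.

Lemma ap_refl e a : 0 <= e -> ap e a a.
Proof. by rewrite /ap subrr (proj2 (na_eq0 0) erefl) => he; rewrite mulr_ge0 // na_ge0. Qed.

Lemma ap_sym e a b : 0 <= e -> e < 1 -> ap e a b -> ap e b a.
Proof. by move=> e0 e1 hab; rewrite /ap naB (ap_abs e0 e1 hab). Qed.

Lemma ap_trans e a b c : 0 <= e -> e < 1 -> ap e a b -> ap e b c -> ap e a c.
Proof.
move=> e0 e1 hab hbc; rewrite /ap.
have -> : a - c = (a - b) + (b - c) by rewrite addrA subrK.
apply: na_le => //.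
by rewrite -(ap_abs e0 e1 hbc).
Qed.

Lemma ap_mul e a b c d : 0 <= e -> e < 1 -> ap e a b -> ap e c d -> ap e (a * c) (b * d).
Proof.
move=> e0 e1 hab hcd; rewrite /ap.
have -> : a * c - b * d = a * (c - d) + (a - b) * d by ring.
have hA := ap_abs e0 e1 hab.
apply: na_le.
  rewrite !na_mul hA; move: hcd; rewrite /ap => hcd.
  have := na_ge0 b; nra.
rewrite !na_mul; move: hab; rewrite /ap => hab'.
have := na_ge0 d; have := na_ge0 b; nra.
Qed.

Lemma ap_inv e a b : 0 <= e -> e < 1 -> ap e a b -> ap e a^-1 b^-1.
Proof.
move=> e0 e1 hab.
have hA := ap_abs e0 e1 hab.
have [b0|bn] := eqVneq b 0.
  have a0 : a = 0 by apply/na_eq0; rewrite hA b0; exact/na_eq0.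
  by rewrite a0 b0 invr0; apply: ap_refl.
have an : a != 0 by apply/eqP => a0; move: (na_gt0 bn); rewrite -hA a0 (proj2 (na_eq0 0) erefl) ltxx.
rewrite /ap.
have -> : a^-1 - b^-1 = (b - a) / (a * b) by field; rewrite an bn.
rewrite naD na_mul naB naV hA.
move: hab; rewrite /ap => hab.
have hb := na_gt0 bn.
rewrite ler_pdivrMr ?mulr_gt0 //.
by rewrite mulrA mulfVK ?gt_eqF.
Qed.

Lemma ap_le e e' a b : e <= e' -> ap e a b -> ap e' a b.
Proof. move=> hee; rewrite /ap => hab; apply: le_trans hab _; by rewrite ler_wpM2r // na_ge0. Qed.

Lemma ap_div e a b c d : 0 <= e -> e < 1 -> ap e a b -> ap e c d -> ap e (a / c) (b / d).
Proof. by move=> e0 e1 h1 h2; apply: ap_mul => //; apply: ap_inv. Qed.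

Lemma ap_eq a b : (forall e, 0 < e -> e < 1 -> ap e a b) -> a = b.
Proof.
move=> H.
have [b0|bn] := eqVneq b 0.
  have := H (1/2) ltac:(lra) ltac:(lra); rewrite /ap b0 subr0 (proj2 (na_eq0 0) erefl) mulr0 => ha.
  by apply/na_eq0; apply/eqP; rewrite eq_le ha na_ge0.
apply/eqP; rewrite -subr_eq0; apply/eqP; apply/na_eq0.
set d := abs (a - b).
have hb := na_gt0 bn.
have d0 : 0 <= d by apply: na_ge0.
apply/eqP; rewrite eq_le d0 andbT; apply/negP => /negP; rewrite -ltNge => dp.
set e := Num.min (1/2) (d / (2 * abs b)).
have e0 : 0 < e by rewrite /e lt_min; apply/andP; split; [lra| rewrite divr_gt0 // mulr_gt0].
have e1 : e < 1 by rewrite /e gt_min; apply/orP; left; lra.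
have := H e e0 e1; rewrite /ap -/d => hd.
have : e <= d / (2 * abs b) by rewrite /e ge_min lexx orbT.
move=> he.
have hq : d / (2 * abs b) * abs b = d / 2.
  by field; rewrite gt_eqF.
have : e * abs b <= d / 2 by rewrite -hq ler_wpM2r // ltW.
lra.
Qed.
End NA.

End Aux2.
Import Aux2.
Module Aux3.

Set Implicit Arguments.
Unset Strict Implicit.

Section Dig.
Variables (R : realType) (F : fieldType) (abs : F -> R) (pi : F) (S : F -> Prop).
Hypothesis hA : nonarch_abs abs.
Hypothesis hpi0 : 0 < abs pi.
Hypothesis hpi1 : abs pi < 1.
Hypothesis hS : complete_reps abs pi S.

Lemma pi_neq0 : pi != 0.
Proof. by apply/eqP => p0; move: hpi0; rewrite p0 (proj2 (na_eq0 hA 0) erefl) ltxx. Qed.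

Lemma D1 x : abs x <= 1 -> S (digit0 abs pi S x) /\ abs (x - digit0 abs pi S x) <= abs pi.
Proof.
move=> hx; rewrite /digit0; apply: (epsilon_spec (inhabits 0) (fun s => S s /\ abs (x - s) <= abs pi)).
case: hS => _ /(_ x hx) [s [Ss [hs _]]]; by exists s.
Qed.

Lemma S_le1 s : S s -> abs s <= 1.
Proof. by case: hS => + _; apply. Qed.

Lemma D0le x : abs x <= 1 -> abs (digit0 abs pi S x) <= 1.
Proof. by move=> /D1 [/S_le1]. Qed.

Lemma D_uniq x s s' : abs x <= 1 -> S s -> abs (x - s) <= abs pi ->
   S s' -> abs (x - s') <= abs pi -> s = s'.
Proof.
move=> hx Ss hs Ss' hs'.
case: hS => _ /(_ x hx) [u [_ [_ U]]].
by rewrite (U s Ss hs) (U s' Ss' hs').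
Qed.

Lemma D2 s z : S s -> abs z <= 1 -> digit0 abs pi S (s + pi * z) = s.
Proof.
move=> Ss hz.
have hx : abs (s + pi * z) <= 1.
  apply: na_le => //; first exact: S_le1.
  rewrite (na_mul hA); have := na_ge0 hA z; have := na_ge0 hA pi; have := hpi1; have := hz; nra.
have [S1 h1] := D1 hx.
apply: (D_uniq hx S1 h1 Ss).
rewrite addrAC subrr add0r (na_mul hA); have := na_ge0 hA z; move: (hpi0) (hpi1) (hz) (na_ge0 hA z) => *; nra.
Qed.

Lemma D3 s z : S s -> abs z <= 1 -> digit_shift abs pi S (s + pi * z) = z.
Proof.
move=> Ss hz; rewrite /digit_shift D2 // addrAC subrr add0r mulrC mulKf //.
exact: pi_neq0.
Qed.

Lemma D5 x : abs x <= 1 -> x = digit0 abs pi S x + pi * digit_shift abs pi S x.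
Proof.
move=> _; rewrite /digit_shift mulrC mulfVK; last exact: pi_neq0.
by rewrite addrC subrK.
Qed.

Lemma D4 x : abs x <= 1 -> abs (digit_shift abs pi S x) <= 1.
Proof.
move=> hx; have [_ h1] := D1 hx.
rewrite /digit_shift (naD hA) ler_pdivrMr // mul1r //.
Qed.

Lemma D6 x y n : abs x <= 1 -> abs y <= 1 -> abs (x - y) <= abs pi ^+ n.+1 ->
  abs (digit_shift abs pi S x - digit_shift abs pi S y) <= abs pi ^+ n.
Proof.
move=> hx hy hxy.
have [Sx h1] := D1 hx.
have [Sy h2] := D1 hy.
have hpn : abs pi ^+ n.+1 <= abs pi.
  rewrite exprS; move: (exprn_ile1 n (ltW hpi0) (ltW hpi1)) (exprn_ge0 n (ltW hpi0)) (hpi0) => *; nra.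
have h3 : abs (y - digit0 abs pi S x) <= abs pi.
  have -> : y - digit0 abs pi S x = (y - x) + (x - digit0 abs pi S x) by rewrite addrA subrK.
  apply: na_le => //; rewrite (naB hA); exact: le_trans hxy hpn.
have e : digit0 abs pi S x = digit0 abs pi S y by apply: (D_uniq hy Sx h3 Sy h2).
rewrite /digit_shift e -mulrBl.
have -> : x - digit0 abs pi S y - (y - digit0 abs pi S y) = x - y by ring.
rewrite (naD hA) ler_pdivrMr // -exprSr //.
Qed.
End Dig.

End Aux3.
Import Aux3.
Module Aux4.


Unset Strict Implicit.

Section Vec.
Variables (R : realType) (m : nat) (F : 'I_m -> fieldType)
  (absF : forall t, F t -> R) (varpi : forall t, F t) (e : 'I_m -> nat)
  (S : forall t, F t -> Prop).
Hypothesis hA : forall t : 'I_m, nonarch_abs (absF t).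
Hypothesis hvp : forall t : 'I_m, uniformizer (absF t) (varpi t).
Hypothesis he : forall t, (0 < e t)%N.
Hypothesis hS : forall t : 'I_m, complete_reps (absF t) (varpi t ^+ e t) (S t).

Set Implicit Arguments.
Unset Strict Implicit.
Local Notation X := (forall t, F t).
Definition pi t : F t := varpi t ^+ e t.
Definition phi := varphi absF varpi e S.
Definition d0 (z : X) : X := fun t => digit0 (absF t) (pi t) (S t) (z t).
Definition inO (z : X) := inObar absF z.
Definition negv (z : X) : X := @negO m F z.

Lemma pi0 t : 0 < absF t (pi t).
Proof. by rewrite /pi (naX (hA t)) exprn_gt0 //; case: (hvp t) => /andP []. Qed.
Lemma pi1 t : absF t (pi t) < 1.
Proof.
rewrite /pi (naX (hA t)) expr_lt1 //; case: (hvp t) => /andP [h1 h2] _ //.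
exact: ltW.
Qed.
Lemma hS' t : complete_reps (absF t) (pi t) (S t). Proof. exact: hS. Qed.

Lemma phiE z t : phi z t = digit_shift (absF t) (pi t) (S t) (z t).
Proof. by []. Qed.

Lemma inO_phi z : inO z -> inO (phi z).
Proof. by move=> hz t; rewrite phiE; apply: (D4 (hA t) (pi0 t) (hS' t)). Qed.

Lemma inO_neg (z : X) : inO z -> inO (negv z).
Proof. by move=> hz t; rewrite /negv /negO (naN (hA t)). Qed.

Lemma negOK (z : X) : negv (negv z) = z.
Proof. apply: functional_extensionality_dep => t; by rewrite /negv /negO opprK. Qed.

Lemma inO_iter k z : inO z -> inO (iter k phi z).
Proof. by elim: k => [//|k IH] hz /=; apply: inO_phi; apply: IH. Qed.

Lemma d0_le w t : inO w -> absF t (d0 w t) <= 1.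
Proof. by move=> hw; apply: (D0le (hS' t)). Qed.

Lemma d0_S w t : inO w -> S t (d0 w t).
Proof. by move=> hw; have [] := D1 (hS' t) (hw t). Qed.

Fixpoint cutv (k : nat) (w z : X) : X :=
  match k with
  | 0 => z
  | k'.+1 => fun t => d0 w t + pi t * cutv k' (phi w) z t
  end.

Lemma inO_cut k w z : inO w -> inO z -> inO (cutv k w z).
Proof.
elim: k w => [//|k IH] w hw hz t /=.
apply: (na_le (hA t)); first exact: d0_le t hw.
rewrite (na_mul (hA t)).
move: (pi1 t) (pi0 t) (IH (phi w) (inO_phi hw) hz t) (na_ge0 (hA t) (cutv k (phi w) z t)) => *.
nra.
Qed.

Lemma phi_cut k w z : inO w -> inO z -> phi (cutv k.+1 w z) = cutv k (phi w) z.
Proof.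
move=> hw hz; apply: functional_extensionality_dep => t.
rewrite phiE /=; apply: (D3 (hA t) (pi0 t) (pi1 t) (hS' t)); first exact: d0_S.
exact: inO_cut _ (inO_phi hw) hz t.
Qed.

Lemma iter_phi_cut k w z : inO w -> inO z -> iter k phi (cutv k w z) = z.
Proof.
elim: k w => [//|k IH] w hw hz.
by rewrite iterSr phi_cut // IH //; apply: inO_phi.
Qed.

Lemma cut_aff k w z t : cutv k w z t = cutv k w (fun _ => 0) t + pi t ^+ k * z t.
Proof.
elim: k w => [|k IH] w /=; first by rewrite expr0 mul1r add0r.
rewrite IH exprS; ring.
Qed.

Lemma cut_diff k w z z' t : cutv k w z t - cutv k w z' t = pi t ^+ k * (z t - z' t).
Proof. rewrite (cut_aff k w z) (cut_aff k w z'); ring. Qed.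

Lemma cut_self k z : inO z -> cutv k z (iter k phi z) = z.
Proof.
elim: k z => [//|k IH] z hz.
apply: functional_extensionality_dep => t /=.
rewrite -iterS iterSr (IH (phi z) (inO_phi hz)).
by rewrite /d0 phiE -(D5 (S t) (hA t) (pi0 t) (hz t)).
Qed.

Lemma cut_add a b w z : cutv (a + b) w z = cutv a w (cutv b (iter a phi w) z).
Proof.
elim: a w => [//|a IH] w.
by rewrite addSn /= IH -iterSr.
Qed.


Lemma d0_cut k w z : inO w -> inO z -> d0 (cutv k.+1 w z) = d0 w.
Proof.
move=> hw hz; apply: functional_extensionality_dep => t.
rewrite /d0 /=; apply: (D2 (hA t) (pi0 t) (pi1 t) (hS' t)); first exact: d0_S.
exact: inO_cut _ (inO_phi hw) hz t.
Qed.

Lemma cut_cut k w z z' : inO w -> inO z -> cutv k (cutv k w z) z' = cutv k w z'.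
Proof.
elim: k w => [//|k IH] w hw hz.
apply: functional_extensionality_dep => t /=.
rewrite -/(cutv k.+1 w z) phi_cut // IH //; last exact: inO_phi.
by rewrite (d0_cut _ hw hz).
Qed.

Lemma zero_inO : inO (fun _ => 0).
Proof. by move=> t; rewrite (proj2 (na_eq0 (hA t) 0) erefl). Qed.

Lemma one_sub_pin k t : (0 < k)%N -> 1 - pi t ^+ k != 0.
Proof.
move=> hk; apply/eqP => h0.
have : absF t (1 - pi t ^+ k) = 1.
  apply: (na_1sub (hA t)); rewrite (naX (hA t)) expr_lt1 //; [exact: pi1|exact: ltW (pi0 t)].
by rewrite h0 (proj2 (na_eq0 (hA t) 0) erefl) => /eqP; rewrite eq_sym oner_eq0.
Qed.

Lemma abs_one_sub_pin k t : (0 < k)%N -> absF t (1 - pi t ^+ k) = 1.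
Proof.
move=> hk; apply: (na_1sub (hA t)); rewrite (naX (hA t)) expr_lt1 //; [exact: pi1|exact: ltW (pi0 t)].
Qed.

Definition s0 : X := fun t => digit0 (absF t) (pi t) (S t) 0.
Definition pfix : X := fun t => s0 t / (1 - pi t ^+ 1).

Lemma s0_S t : S t (s0 t).
Proof. have [] // := D1 (hS' t) (x := 0); by rewrite (proj2 (na_eq0 (hA t) 0) erefl). Qed.

Lemma p_eq t : pfix t = s0 t + pi t * pfix t.
Proof.
have h := @one_sub_pin 1 t erefl.
rewrite /pfix expr1 in h *; field; exact: h.
Qed.

Lemma pfix_inO : inO pfix.
Proof.
move=> t; rewrite /pfix (naD (hA t)) abs_one_sub_pin // divr1.
have := S_le1 (hS' t) (s0_S t). by [].
Qed.

Lemma phi_pfix : phi pfix = pfix.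
Proof.
apply: functional_extensionality_dep => t.
rewrite phiE {1}p_eq (D3 (hA t) (pi0 t) (pi1 t) (hS' t)) //; first exact: s0_S.
exact: pfix_inO.
Qed.

Lemma iter_pfix k : iter k phi pfix = pfix.
Proof. by elim: k => [//|k IH] /=; rewrite IH phi_pfix. Qed.

Lemma cut_pp k : cutv k pfix pfix = pfix.
Proof. by rewrite -{2}(iter_pfix k) cut_self //; exact: pfix_inO. Qed.

Definition Per (k : nat) (w : X) : X := fun t => cutv k w (fun _ => 0) t / (1 - pi t ^+ k).

Lemma Per_fix k w : (0 < k)%N -> cutv k w (Per k w) = Per k w.
Proof.
move=> hk; apply: functional_extensionality_dep => t.
rewrite cut_aff /Per; have h := one_sub_pin t hk; field; exact: h.
Qed.

Lemma inO_Per k w : (0 < k)%N -> inO w -> inO (Per k w).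
Proof.
move=> hk hw t; rewrite /Per (naD (hA t)) abs_one_sub_pin // divr1.
exact: inO_cut _ hw zero_inO t.
Qed.

Lemma iter_Per k w : (0 < k)%N -> inO w -> iter k phi (Per k w) = Per k w.
Proof.
move=> hk hw; rewrite -{1}(@Per_fix k w hk) iter_phi_cut //; exact: inO_Per.
Qed.

Definition closeN (n : nat) (z v : X) := forall t, absF t (z t - v t) <= absF t (pi t) ^+ n.

Lemma closeN_mono n k z v : (n <= k)%N -> closeN k z v -> closeN n z v.
Proof.
move=> hnk h t; apply: le_trans (h t) _.
apply: ler_wiXn2l => //; [exact: ltW (pi0 t)|exact: ltW (pi1 t)].
Qed.

Lemma closeN_sym n z v : closeN n z v -> closeN n v z.
Proof. by move=> h t; rewrite (naB (hA t)). Qed.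

Lemma closeN_trans n z v w : closeN n z v -> closeN n v w -> closeN n z w.
Proof.
move=> h1 h2 t.
have -> : z t - w t = (z t - v t) + (v t - w t) by rewrite addrA subrK.
exact: na_le (hA t) _ _ _ (h1 t) (h2 t).
Qed.

Lemma closeN0 z v : inO z -> inO v -> closeN 0 z v.
Proof. by move=> hz hv t; rewrite expr0; apply: na_le_sub (hA t) _ _ _ (hz t) (hv t). Qed.

Lemma closeN_refl n z : closeN n z z.
Proof.
move=> t; rewrite subrr (proj2 (na_eq0 (hA t) 0) erefl).
exact: exprn_ge0 (ltW (pi0 t)).
Qed.

Lemma closeN_cut n k w z z' : closeN n z z' -> closeN (k + n) (cutv k w z) (cutv k w z').
Proof.
move=> h t; rewrite cut_diff (na_mul (hA t)) (naX (hA t)) exprD.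
apply: ler_wpM2l; [exact: exprn_ge0 (ltW (pi0 t))| exact: h].
Qed.

Lemma closeN_cut' n k w z z' : closeN n z z' -> closeN n (cutv k w z) (cutv k w z').
Proof. by move=> h; apply: closeN_mono (closeN_cut k w h); rewrite leq_addl. Qed.

Lemma closeN_cutk k w z z' : inO z -> inO z' -> closeN k (cutv k w z) (cutv k w z').
Proof. by move=> hz hz'; have := closeN_cut k w (closeN0 hz hz'); rewrite addn0. Qed.

Lemma closeN_neg n z v : closeN n z v -> closeN n (negv z) (negv v).
Proof. by move=> h t; rewrite /negv /negO -opprD (naN (hA t)). Qed.

Lemma closeN_phi n z v : inO z -> inO v -> closeN n.+1 z v -> closeN n (phi z) (phi v).
Proof.
move=> hz hv h t; rewrite !phiE.
exact: (D6 (hA t) (pi0 t) (pi1 t) (hS' t) (hz t) (hv t) (h t)).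
Qed.


Lemma finN (I : finType) (Q : I -> nat -> Prop) :
  (forall i n k, (n <= k)%N -> Q i n -> Q i k) -> (forall i, exists n, Q i n) ->
  exists n, forall i, Q i n.
Proof.
move=> hmono hex.
have [g hg] : {g : I -> nat | forall i, Q i (g i)}.
  apply: constructive_indefinite_description.
  have := fun i => constructive_indefinite_description _ (hex i).
  move=> hs; exists (fun i => sval (hs i)) => i; exact: svalP (hs i).
exists (\max_i g i) => i; apply: hmono (hg i); exact: leq_bigmax.
Qed.

Lemma small_powN (d : R) : 0 < d -> exists N, forall t, absF t (pi t) ^+ N < d.
Proof.
move=> hd.
have [N hN] : exists N, forall t, forall n, (N <= n)%N -> absF t (pi t) ^+ n < d.
  apply: (finN (Q := fun t N => forall n, (N <= n)%N -> absF t (pi t) ^+ n < d)).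
    by move=> i n k hnk hQ n' hn'; apply: hQ; apply: leq_trans hn'.
  move=> t; exact: small_pow (ltW (pi0 t)) (pi1 t) hd.
by exists N => t; apply: hN.
Qed.

Variables (K : fieldType) (absK : K -> R).
Hypothesis hK : nonarch_abs absK.
Hypothesis hKc : forall u, abs_cauchy absK u -> abs_converges absK u.

Local Notation apK := (ap absK).

Definition relc (h : X -> K) (v : X) :=
  forall eps : R, 0 < eps -> eps < 1 -> exists N, forall z, inO z -> closeN N z v ->
    apK eps (h z) (h v).

Lemma relc_of_cont h v : contObar absF absK h -> inO v -> h v != 0 -> relc h v.
Proof.
move=> hc hv hn eps e0 e1.
have hpos : 0 < eps * absK (h v) by rewrite mulr_gt0 // (na_gt0 hK).
have [d d0 hd] := hc v hv _ hpos.
have [N hN] := small_powN d0.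
exists N => z hz hzv; rewrite /ap; apply: ltW; apply: hd => // t.
exact: le_lt_trans (hzv t) (hN t).
Qed.

Definition cpi : R := \prod_t absF t (pi t).

Lemma cpi_gt0 : 0 < cpi.
Proof. by apply: prodr_gt0 => t _; exact: pi0. Qed.

Lemma cpi_le t : cpi <= absF t (pi t).
Proof.
rewrite /cpi (bigD1 t) //=.
have h1 : \prod_(j | j != t) absF j (pi j) <= 1.
  apply: prodr_ile1 => j _; apply/andP; split; [exact: ltW (pi0 j)|exact: ltW (pi1 j)].
have h2 : 0 <= \prod_(j | j != t) absF j (pi j) by apply: prodr_ge0 => j _; exact: ltW (pi0 j).
move: (pi0 t) => h3; nra.
Qed.

Lemma cont_of_relc h : (forall v, inO v -> relc h v) -> contObar absF absK h.
Proof.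
move=> hr v hv eps e0.
set c := absK (h v).
have c0 : 0 <= c by apply: (na_ge0 hK).
set ee := Num.min (1/2) (eps / (c + 1)).
have ee0 : 0 < ee by rewrite /ee lt_min; apply/andP; split; [lra|rewrite divr_gt0 //; lra].
have ee1 : ee < 1 by rewrite /ee gt_min; apply/orP; left; lra.
have [N hN] := hr v hv ee ee0 ee1.
exists (cpi ^+ N); first exact: exprn_gt0 cpi_gt0.
move=> y hy hyv.
have hc : closeN N y v.
  move=> t; apply: ltW; apply: lt_le_trans (hyv t) _.
  apply: lerXn2r; [exact: ltW cpi_gt0|exact: ltW (pi0 t)|exact: cpi_le].
have := hN y hy hc; rewrite /ap -/c => h1.
apply: le_lt_trans h1 _.
have h2 : ee <= eps / (c + 1) by rewrite /ee ge_min lexx orbT.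
have h3 : eps / (c + 1) * c < eps.
  have q : eps / (c + 1) * c = eps - eps / (c + 1) by field; rewrite gt_eqF //; lra.
  have : 0 < eps / (c + 1) by rewrite divr_gt0 //; lra.
  lra.
have := ler_wpM2r c0 h2; lra.
Qed.

Lemma relc_mul (a b : X -> K) v : relc a v -> relc b v -> relc (fun z => a z * b z) v.
Proof.
move=> ha hb eps e0 e1.
have [N1 h1] := ha eps e0 e1; have [N2 h2] := hb eps e0 e1.
exists (maxn N1 N2) => z hz hzv; apply: (ap_mul hK (ltW e0) e1).
  by apply: h1 => //; apply: closeN_mono hzv; rewrite leq_maxl.
by apply: h2 => //; apply: closeN_mono hzv; rewrite leq_maxr.
Qed.

Lemma relc_inv (a : X -> K) v : relc a v -> relc (fun z => (a z)^-1) v.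
Proof.
move=> ha eps e0 e1; have [N h1] := ha eps e0 e1.
by exists N => z hz hzv; apply: (ap_inv hK (ltW e0) e1); apply: h1.
Qed.

Lemma relc_neg (a : X -> K) v : relc a (negv v) -> relc (fun z => a (negv z)) v.
Proof.
move=> ha eps e0 e1; have [N h1] := ha eps e0 e1.
by exists N => z hz hzv; apply: h1; [exact: inO_neg|exact: closeN_neg].
Qed.

Definition psi (z : X) : X := negv (phi (negv z)).

Lemma inO_psi z : inO z -> inO (psi z).
Proof. by move=> hz; apply: inO_neg; apply: inO_phi; apply: inO_neg. Qed.

Lemma relc_psi (a : X -> K) v : inO v -> relc a (psi v) -> relc (fun z => a (psi z)) v.
Proof.
move=> hv ha eps e0 e1; have [N h1] := ha eps e0 e1.
exists N.+1 => z hz hzv; apply: h1; first exact: inO_psi.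
apply: closeN_neg; apply: closeN_phi; try exact: inO_neg.
exact: closeN_neg.
Qed.


Section Cons.
Variable f : X -> K.
Hypothesis hfc : forall v, inO v -> relc f v.
Hypothesis hfn : forall v, inO v -> f v != 0.
Hypothesis hfp : forall n Q, inO Q -> iter n phi Q = Q -> \prod_(j < n) f (iter j phi Q) = 1.

Definition Pi n z := \prod_(j < n) f (iter j phi z).

Lemma Pi_S n z : Pi n.+1 z = f z * Pi n (phi z).
Proof.
rewrite /Pi big_ord_recl /=; congr (_ * _).
by apply: eq_bigr => j _; rewrite add0n -iterS iterSr.
Qed.

Lemma Pi_add a b z : Pi (a + b) z = Pi a z * Pi b (iter a phi z).
Proof.
elim: a z => [|a IH] z; first by rewrite /Pi big_ord0 mul1r.
by rewrite addSn !Pi_S IH mulrA iterSr.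
Qed.

Lemma Pi_neq0 n z : inO z -> Pi n z != 0.
Proof.
move=> hz; rewrite /Pi; apply/prodf_neq0 => j _; apply: hfn; exact: inO_iter.
Qed.

Lemma f_pfix : f pfix = 1.
Proof.
have := @hfp 1 pfix pfix_inO (iter_pfix 1).
by rewrite big_ord_recl big_ord0 mulr1.
Qed.

Definition U L z := Pi L (cutv L pfix z).

Lemma U_S L z : inO z -> U L.+1 z = f (cutv L.+1 pfix z) * U L z.
Proof. by move=> hz; rewrite /U Pi_S phi_cut // ?phi_pfix //; exact: pfix_inO. Qed.

Lemma U_neq0 L z : inO z -> U L z != 0.
Proof. move=> hz; apply: Pi_neq0; apply: inO_cut hz; exact: pfix_inO. Qed.

Lemma tail_near1 eps : 0 < eps -> eps < 1 -> exists N0, forall z, inO z -> forall r, (N0 <= r)%N ->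
  apK eps (f (cutv r pfix z)) 1.
Proof.
move=> e0 e1; have [N0 h0] := hfc pfix_inO e0 e1.
exists N0 => z hz r hr; rewrite -f_pfix; apply: h0.
  apply: inO_cut hz; exact: pfix_inO.
rewrite -{2}(cut_pp r); apply: closeN_mono hr _; apply: closeN_cutk => //; exact: pfix_inO.
Qed.

Lemma FL v eps : inO v -> 0 < eps -> eps < 1 -> exists N, forall z, inO z -> closeN N z v ->
  forall r, apK eps (f (cutv r pfix z)) (f (cutv r pfix v)).
Proof.
move=> hv e0 e1.
have [N0 h0] := tail_near1 e0 e1.
have hp := pfix_inO.
have [N hN] := finN (I := 'I_N0) (Q := fun r N => forall x, inO x -> closeN N x (cutv r pfix v) ->
    apK eps (f x) (f (cutv r pfix v))) 
  (fun i n k hnk hQ x hx hxc => hQ x hx (closeN_mono hnk hxc))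
  (fun i => hfc (inO_cut i hp hv) e0 e1).
exists N => z hz hzv r.
have [hr|hr] := ltnP r N0.
  apply: (hN (Ordinal hr)); first exact: inO_cut.
  exact: closeN_cut'.
apply: (ap_trans hK (ltW e0) e1 (h0 z hz r hr)).
apply: (ap_sym hK (ltW e0) e1); exact: h0.
Qed.

Lemma U_ap v eps : inO v -> 0 < eps -> eps < 1 -> exists N, forall z, inO z -> closeN N z v ->
  forall L, apK eps (U L z) (U L v).
Proof.
move=> hv e0 e1; have [N hN] := FL hv e0 e1.
exists N => z hz hzv; elim => [|L IH].
  by rewrite /U /Pi !big_ord0; exact: (ap_refl hK _ (ltW e0)).
rewrite !U_S //; apply: (ap_mul hK (ltW e0) e1) => //; exact: hN.
Qed.

Lemma U_tail eps : 0 < eps -> eps < 1 -> exists N0, forall z, inO z -> forall L L', (N0 <= L)%N -> (N0 <= L')%N ->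
  apK eps (U L z) (U L' z).
Proof.
move=> e0 e1; have [N0 h0] := tail_near1 e0 e1.
have key : forall z, inO z -> forall k, apK eps (U (N0 + k) z) (U N0 z).
  move=> z hz; elim => [|k IH]; first by rewrite addn0; exact: (ap_refl hK _ (ltW e0)).
  rewrite addnS U_S // -[U N0 z]mul1r.
  apply: (ap_mul hK (ltW e0) e1) => //; apply: h0 => //; rewrite -addnS; exact: leq_addr.
exists N0 => z hz L L' hL hL'.
rewrite -(subnKC hL) -(subnKC hL').
apply: (ap_trans hK (ltW e0) e1 (key z hz _)); apply: (ap_sym hK (ltW e0) e1); exact: key.
Qed.

Definition Phi (z : X) : K := epsilon (inhabits 0) (fun l => forall eps, 0 < eps -> exists N, forall i, (N <= i)%N ->
    absK (U i z - l) < eps).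

Lemma Phi_lim z eps : inO z -> 0 < eps -> eps < 1 -> exists L0, forall L, (L0 <= L)%N -> apK eps (Phi z) (U L z).
Proof.
move=> hz e0 e1.
have h2a : (0 : R) < 1/2 by lra.
have h2b : (1/2 : R) < 1 by lra.
have [N1 hN1] := U_tail h2a h2b.
set c := absK (U N1 z).
have c0 : 0 < c by apply: (na_gt0 hK); exact: U_neq0.
have habs : forall L, (N1 <= L)%N -> absK (U L z) = c.
  move=> L hL; apply: (ap_abs hK (ltW h2a) h2b); exact: hN1.
have hconv : abs_converges absK (fun i => U i z).
  apply: hKc => eps' e0'.
  set ee := Num.min (1/2) (eps' / (2 * c)).
  have ee0 : 0 < ee by rewrite /ee lt_min; apply/andP; split; [lra|rewrite divr_gt0 // mulr_gt0 //].
  have ee1 : ee < 1 by rewrite /ee gt_min; apply/orP; left; lra.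
  have [N2 hN2] := U_tail ee0 ee1.
  exists (maxn N1 N2) => i j hi hj.
  have := hN2 z hz i j (leq_trans (leq_maxr _ _) hi) (leq_trans (leq_maxr _ _) hj).
  rewrite /ap (habs j (leq_trans (leq_maxl _ _) hj)) => h.
  apply: le_lt_trans h _.
  have : ee <= eps' / (2 * c) by rewrite /ee ge_min lexx orbT.
  have q : eps' / (2 * c) * c = eps' / 2 by field; rewrite gt_eqF.
  move=> hle; have := ler_wpM2r (ltW c0) hle; lra.
have hPhi : forall eps, 0 < eps -> exists N, forall i, (N <= i)%N -> absK (U i z - Phi z) < eps.
  rewrite /Phi; apply: (epsilon_spec (inhabits 0) (fun l => forall eps, 0 < eps -> exists N, forall i, (N <= i)%N ->
    absK (U i z - l) < eps)).
  exact: hconv.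
have [N3 hN3] := hPhi (eps * c) (mulr_gt0 e0 c0).
exists (maxn N1 N3) => L hL.
rewrite /ap (habs L (leq_trans (leq_maxl _ _) hL)) (naB hK).
apply: ltW; apply: hN3; exact: leq_trans (leq_maxr _ _) hL.
Qed.

Lemma Phi_neq0 z : inO z -> Phi z != 0.
Proof.
move=> hz.
have h2a : (0 : R) < 1/2 by lra.
have h2b : (1/2 : R) < 1 by lra.
have [L0 hL0] := Phi_lim hz h2a h2b.
have := ap_abs hK (ltW h2a) h2b (hL0 L0 (leqnn _)).
move=> ee; apply/eqP => p0.
move: (U_neq0 L0 hz) => /(na_neq0 hK); rewrite -ee p0.
by rewrite (proj2 (na_eq0 hK 0) erefl) eqxx.
Qed.


Lemma Phi_relc v : inO v -> relc Phi v.
Proof.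
move=> hv eps e0 e1.
have [N hN] := U_ap hv e0 e1.
exists N => z hz hzv.
have [L1 h1] := Phi_lim hz e0 e1.
have [L2 h2] := Phi_lim hv e0 e1.
set L := maxn L1 L2.
have a1 := h1 L (leq_maxl _ _).
have a2 := h2 L (leq_maxr _ _).
apply: (ap_trans hK (ltW e0) e1 a1).
apply: (ap_trans hK (ltW e0) e1 (hN z hz hzv L)).
exact: (ap_sym hK (ltW e0) e1 a2).
Qed.

Lemma E2 eps M : 0 < eps -> eps < 1 -> forall w, inO w -> exists L0, forall z, inO z -> closeN L0 z pfix ->
  apK eps (Pi M (cutv M w z)) (Pi M (cutv M w pfix)).
Proof.
move=> e0 e1; elim: M => [|M IH] w hw.
  by exists 0%N => z hz _; rewrite /Pi !big_ord0; exact: (ap_refl hK _ (ltW e0)).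
have hp := pfix_inO.
have [N1 h1] := hfc (inO_cut M.+1 hw hp) e0 e1.
have [N2 h2] := IH (phi w) (inO_phi hw).
exists (maxn N1 N2) => z hz hzp.
rewrite !Pi_S !phi_cut //.
apply: (ap_mul hK (ltW e0) e1).
  apply: h1; first exact: inO_cut.
  apply: closeN_cut'; apply: closeN_mono hzp; exact: leq_maxl.
apply: h2 => //; apply: closeN_mono hzp; exact: leq_maxr.
Qed.

Lemma Phi_coh y : inO y -> Phi (phi y) = f y * Phi y.
Proof.
move=> hy; rewrite mulrC; apply: (ap_eq hK) => eps e0 e1.
have e0' := ltW e0.
have hp := pfix_inO.
have hpy := inO_phi hy.
have [Na hNa] := U_ap hpy e0 e1.
have [Nb hNb] := U_ap hy e0 e1.
have [Nc hNc] := hfc hy e0 e1.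
set M := (maxn Na (maxn Nb Nc)).+1.
have [L0 hL0] := E2 M e0 e1 hpy.
have [L1 hL1] := Phi_lim hpy e0 e1.
have [L2 hL2] := Phi_lim hy e0 e1.
set L := maxn L0 (maxn L1 L2).
have hLM : (0 < L + M)%N by rewrite addnS.
have hLM2 : (0 < L + M.+1)%N by rewrite addnS.
set w1 := cutv L pfix (phi y).
have hw1 : inO w1 by apply: inO_cut.
set P1 := Per (L + M) w1.
have hP1 : inO P1 by apply: inO_Per.
set u1 := cutv M (phi y) P1.
have hu1 : inO u1 by apply: inO_cut.
have eP1 : P1 = cutv L pfix u1.
  have h := @Per_fix (L + M) w1 hLM; rewrite -/P1 in h.
  by rewrite -{1}h cut_add /w1 iter_phi_cut // cut_cut.
have prod1 : U L u1 * Pi M (cutv M (phi y) P1) = 1.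
  have iL1 : iter L phi P1 = u1 by rewrite {1}eP1 iter_phi_cut //; exact: pfix_inO.
  have := hfp hP1 (iter_Per hLM hw1).
  by rewrite -/(Pi (L + M) P1) Pi_add iL1 /U -eP1.
set w2 := cutv L pfix y.
have hw2 : inO w2 by apply: inO_cut.
set P2 := Per (L + M.+1) w2.
have hP2 : inO P2 by apply: inO_Per.
set u2 := cutv M.+1 y P2.
have hu2 : inO u2 by apply: inO_cut.
have eP2 : P2 = cutv L pfix u2.
  have h := @Per_fix (L + M.+1) w2 hLM2; rewrite -/P2 in h.
  by rewrite -{1}h cut_add /w2 iter_phi_cut // cut_cut.
have prod2 : U L u2 * (f u2 * Pi M (cutv M (phi y) P2)) = 1.
  have iL2 : iter L phi P2 = u2 by rewrite {1}eP2 iter_phi_cut //; exact: pfix_inO.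
  have := hfp hP2 (iter_Per hLM2 hw2).
  by rewrite -/(Pi (L + M.+1) P2) Pi_add iL2 /U -eP2 Pi_S /u2 phi_cut.
have c1 : closeN M u1 (phi y).
  rewrite -[X in closeN _ _ X](cut_self M hpy) /u1; apply: closeN_cutk => //; exact: inO_iter.
have c2 : closeN M.+1 u2 y.
  rewrite -[X in closeN _ _ X](cut_self M.+1 hy) /u2; apply: closeN_cutk => //; exact: inO_iter.
have cP1 : closeN L P1 pfix by rewrite eP1 -[X in closeN _ _ X](cut_pp L); apply: closeN_cutk.
have cP2 : closeN L P2 pfix by rewrite eP2 -[X in closeN _ _ X](cut_pp L); apply: closeN_cutk.
have hMa : (Na <= M)%N by rewrite /M ltnW // ltnS leq_maxl.
have hMb : (Nb <= M.+1)%N by rewrite /M ltnW // ltnS ltnW // ltnS (leq_trans (leq_maxl Nb Nc)) // leq_maxr.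
have hMc : (Nc <= M.+1)%N by rewrite /M ltnW // ltnS ltnW // ltnS (leq_trans (leq_maxr Nb Nc)) // leq_maxr.
have hL0' : (L0 <= L)%N by rewrite leq_maxl.
have hL1' : (L1 <= L)%N by rewrite /L (leq_trans (leq_maxl L1 L2)) // leq_maxr.
have hL2' : (L2 <= L)%N by rewrite /L (leq_trans (leq_maxr L1 L2)) // leq_maxr.
have A1 : apK eps (Phi (phi y)) (U L (phi y)) := hL1 L hL1'.
have A2 : apK eps (U L (phi y)) (U L u1).
  apply: (ap_sym hK e0' e1); apply: hNa => //; exact: closeN_mono hMa c1.
have X1ne : Pi M (cutv M (phi y) P1) != 0 by apply: Pi_neq0; apply: inO_cut.
have X2ne : Pi M (cutv M (phi y) P2) != 0 by apply: Pi_neq0; apply: inO_cut.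
have E1 : U L u1 = (Pi M (cutv M (phi y) P1))^-1.
  by apply: (mulIf X1ne); rewrite prod1 mulVf.
have E3 : U L u2 * f u2 = (Pi M (cutv M (phi y) P2))^-1.
  by apply: (mulIf X2ne); rewrite -mulrA prod2 mulVf.
have A3 : apK eps (Pi M (cutv M (phi y) P1)) (Pi M (cutv M (phi y) P2)).
  apply: (ap_trans hK e0' e1 (hL0 P1 hP1 (closeN_mono hL0' cP1))).
  apply: (ap_sym hK e0' e1); exact: hL0 P2 hP2 (closeN_mono hL0' cP2).
have A4 : apK eps (U L u2 * f u2) (U L y * f y).
  apply: (ap_mul hK e0' e1).
    apply: hNb => //; exact: closeN_mono hMb c2.
  apply: hNc => //; exact: closeN_mono hMc c2.
have A5 : apK eps (U L y * f y) (Phi y * f y).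
  apply: (ap_mul hK e0' e1); last exact: (ap_refl hK _ e0').
  apply: (ap_sym hK e0' e1); exact: hL2 L hL2'.
apply: (ap_trans hK e0' e1 A1); apply: (ap_trans hK e0' e1 A2).
rewrite E1; apply: (ap_trans hK e0' e1 (ap_inv hK e0' e1 A3)).
rewrite -E3; exact: (ap_trans hK e0' e1 A4 A5).
Qed.
End Cons.


Lemma relc_congr (a b : X -> K) v : (forall z, inO z -> a z = b z) -> inO v -> relc a v -> relc b v.
Proof.
move=> hab hv ha eps e0 e1; have [N hN] := ha eps e0 e1.
by exists N => z hz hzv; rewrite -!hab //; apply: hN.
Qed.

Lemma prod_shift (g : nat -> K) n : g n = g 0%N ->
  \prod_(j < n) g j.+1 = \prod_(j < n) g j.
Proof.
case: n => [|k] hk; first by rewrite !big_ord0.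
by rewrite big_ord_recr /= hk big_ord_recl /= mulrC.
Qed.

Variables (Gam H : X -> K).
Hypothesis hGc : contObar absF absK Gam.
Hypothesis hGn : nonvanishingObar absF Gam.

Lemma main_iff :
  (contObar absF absK H /\ nonvanishingObar absF H /\
   forall (n : nat) (x : X), inO x ->
     iter n phi (negv x) = negv x ->
     \prod_(j < n) Gam (negv (iter j phi (negv x))) =
     \prod_(j < n) H (negv (iter j phi (negv x))))
  <->
  (exists G : X -> K,
     contObar absF absK G /\ nonvanishingObar absF G /\
     forall x, inO x ->
       H x = Gam x * (G x / G (negv (phi (negv x))))).
Proof.
have hGn' : forall z, inO z -> Gam z != 0 by move=> z hz; apply/eqP; exact: hGn.
split.
  move=> [hHc [hHn hper]].
  have hHn' : forall z, inO z -> H z != 0 by move=> z hz; apply/eqP; exact: hHn.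
  pose f z := H (negv z) / Gam (negv z).
  have hfc : forall v, inO v -> relc f v.
    move=> v hv; apply: (relc_mul (a := fun z => H (negv z)) (b := fun z => (Gam (negv z))^-1)).
      apply: (relc_neg (a := H)).
      by apply: relc_of_cont => //; [exact: inO_neg| apply: hHn'; exact: inO_neg].
    apply: (relc_inv (a := fun z => Gam (negv z))); apply: (relc_neg (a := Gam)).
    by apply: relc_of_cont => //; [exact: inO_neg| apply: hGn'; exact: inO_neg].
  have hfn : forall v, inO v -> f v != 0.
    move=> v hv; rewrite /f mulf_neq0 // ?invr_neq0 //; [apply: hHn'|apply: hGn']; exact: inO_neg.
  have hfp : forall n Q, inO Q -> iter n phi Q = Q -> \prod_(j < n) f (iter j phi Q) = 1.
    move=> n Q hQ hit.
    have := hper n (negv Q) (inO_neg hQ); rewrite negOK => /(_ hit) hp.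
    rewrite /f prodf_div -hp divff //; apply/prodf_neq0 => j _; apply: hGn'.
    apply: inO_neg; exact: inO_iter.
  exists (fun x => (Phi f (negv x))^-1); split; [|split].
  - apply: cont_of_relc => v hv; apply: (relc_inv (a := fun x => Phi f (negv x))).
    apply: (relc_neg (a := Phi f)); apply: Phi_relc => //; exact: inO_neg.
  - move=> x hx; apply/eqP; rewrite invr_neq0 //; apply: Phi_neq0 => //; exact: inO_neg.
  - move=> x hx; rewrite negOK Phi_coh //; last exact: inO_neg.
    have h1 := Phi_neq0 hfc hfn hfp (inO_neg hx).
    have h2 := hfn _ (inO_neg hx).
    have h3 := hGn' _ hx.
    rewrite /f negOK in h2 *.
    field.
    by rewrite h1 h3 /=; move: h2; rewrite mulf_eq0 invr_eq0 negb_or => /andP [-> _].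
move=> [G [hGc2 [hGn2 heq]]].
have hGn2' : forall z, inO z -> G z != 0 by move=> z hz; apply/eqP; exact: hGn2.
split; [|split].
- apply: cont_of_relc => v hv.
  apply: (relc_congr (a := fun z => Gam z * (G z / G (psi z)))) => //.
    by move=> z hz; rewrite heq.
  apply: relc_mul; first by apply: relc_of_cont => //; exact: hGn'.
  apply: relc_mul; first by apply: relc_of_cont => //; exact: hGn2'.
  apply: (relc_inv (a := fun z => G (psi z))).
  apply: (relc_psi (a := G)) => //; apply: relc_of_cont => //; [exact: inO_psi|apply: hGn2'; exact: inO_psi].
- move=> x hx; apply/eqP; rewrite heq // mulf_neq0 ?hGn' // mulf_neq0 ?hGn2' // invr_neq0 //.
  apply: hGn2'; exact: inO_psi.
- move=> n x hx hit.
  pose y j := negv (iter j phi (negv x)).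
  have hy : forall j, inO (y j) by move=> j; apply: inO_neg; apply: inO_iter; exact: inO_neg.
  have hpsi : forall j, negv (phi (negv (y j))) = y j.+1 by move=> j; rewrite /y negOK.
  rewrite -/(y _).
  transitivity (\prod_(j < n) (Gam (y j) * (G (y j) / G (y j.+1)))); last first.
    by apply: eq_bigr => j _; rewrite (heq _ (hy j)) /y negOK.
  rewrite big_split /= prodf_div.
  have -> : \prod_(j < n) G (y j.+1) = \prod_(j < n) G (y j).
    apply: (prod_shift (g := fun j => G (y j))); by rewrite /y hit /= negOK.
  rewrite divff ?mulr1 //; apply/prodf_neq0 => j _; exact: hGn2'.
Qed.

End Vec.

End Aux4.
Import Aux4.

Unset Implicit Arguments.
Theorem mainTheorem2 (R : realType) (m : nat) (F : 'I_m -> fieldType)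
  (absF : forall t, F t -> R)
  (hF : forall t, nonarch_local_field (absF t))
  (varpi : forall t, F t) (hvarpi : forall t, uniformizer (absF t) (varpi t))
  (e : 'I_m -> nat) (he : forall t, (0 < e t)%N)
  (S : forall t, F t -> Prop)
  (hS : forall t, complete_reps (absF t) (varpi t ^+ e t) (S t))
  (K : fieldType) (absK : K -> R) (hK : complete_nonarch_field absK)
  (Gam : (forall t, F t) -> K)
  (hGam_cont : contObar absF absK Gam)
  (hGam_nv : nonvanishingObar absF Gam)
  (H : (forall t, F t) -> K) :
  let phi := varphi absF varpi e S in
  (contObar absF absK H /\ nonvanishingObar absF H /\
   forall (n : nat) (x : forall t, F t), inObar absF x ->
     iter n phi (negO x) = negO x ->
     \prod_(j < n) Gam (negO (iter j phi (negO x))) =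
     \prod_(j < n) H (negO (iter j phi (negO x))))
  <->
  (exists G : (forall t, F t) -> K,
     contObar absF absK G /\ nonvanishingObar absF G /\
     forall x, inObar absF x ->
       H x = Gam x * (G x / G (negO (phi (negO x))))).

Proof.
move=> phi.
have hA : forall t, nonarch_abs (absF t) := fun t => proj1 (proj1 (hF t)).
exact: (main_iff hA hvarpi he hS (proj1 hK) (proj2 hK) H hGam_cont hGam_nv).
Qed.
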